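(* For integers $n\ge1$ and $q\ge2$, $$\mathbb E_{{\boldsymbol y}\in\Sigma_q^{n-1}}\big[\mathsf{H}^{\mathsf{In}}_{1\text{-}\mathsf{Del}}({\boldsymbol y})\big]=\log_2(nq)-\frac{\sum_{r=1}^{n-1}N_{n-1,r,q}\,(r+1)\log_2(r+1)}{nq^n},$$ $$\mathbb E_{{\boldsymbol y}\in\Sigma_q^{n+1}}\big[\mathsf{H}^{\mathsf{In}}_{1\text{-}\mathsf{Ins}}({\boldsymbol y})\big]=\log_2(n+1)-\frac{\sum_{r=1}^{n+1}N_{n+1,r,q}\,r\log_2 r}{(n+1)q^{n+1}},$$ where the expectations are over ${\boldsymbol y}$ uniformly distributed on the indicated sets.
   Context: $\Sigma_q=\{0,\dots,q-1\}$. For sequences ${\boldsymbol u}$ of length $\ell$ and ${\boldsymbol v}$ of length $N\ge\ell$, $\omega_{{\boldsymbol u}}({\boldsymbol v})$ is the number of index tuples $1\le i_1<\dots<i_\ell\le N$ with $v_{i_j}=u_j$. The $1$-deletion channel with input length $n$ maps ${\boldsymbol x}\in\Sigma_q^n$ to ${\boldsymbol y}\in\Sigma_q^{n-1}$ with probability $\omega_{{\boldsymbol y}}({\boldsymbol x})/n$; the $1$-insertion channel with input length $n$ maps ${\boldsymbol x}\in\Sigma_q^n$ to ${\boldsymbol y}\in\Sigma_q^{n+1}$ with probability $\omega_{{\boldsymbol x}}({\boldsymbol y})/((n+1)q)$. Under uniform transmission ($X$ uniform on $\Sigma_q^n$), the input entropy of an output ${\boldsymbol y}$ is $H(X\mid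 Y={\boldsymbol y})$ in bits, with posterior $P({\boldsymbol x}\mid {\boldsymbol y})=\Pr\{{\boldsymbol y}\mid{\boldsymbol x}\}/\sum_{{\boldsymbol x}'}\Pr\{{\boldsymbol y}\mid{\boldsymbol x}'\}$; these are denoted $\mathsf{H}^{\mathsf{In}}_{1\text{-}\mathsf{Del}}({\boldsymbol y})$ and $\mathsf{H}^{\mathsf{In}}_{1\text{-}\mathsf{Ins}}({\boldsymbol y})$ respectively. A run is a maximal block of identical consecutive symbols, and $N_{\ell,r,q}$ denotes the total number of runs of length exactly $r$ counted over all sequences in $\Sigma_q^{\ell}$. *)

(* Defs.v *)
From HB Require Import structures.
From mathcomp Require Import all_boot all_order all_algebra.
From mathcomp Require Import reals exp.
Set Implicit Arguments. Unset Strict Implicit. Unset Printing Implicit Defensive.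
Import Order.TTheory GRing.Theory Num.Theory.
Local Open Scope ring_scope.

(* Sigma_q^l is represented by l.-tuple 'I_q. *)

(* omega_u(v): number of index tuples i_1 < ... < i_l (0-based here) with
   v_{i_j} = u_j, i.e. strictly increasing maps f : 'I_l -> 'I_N with
   v (f j) = u j. *)
Definition omega (q l N : nat) (u : l.-tuple 'I_q) (v : N.-tuple 'I_q) : nat :=
  #|[set f : {ffun 'I_l -> 'I_N} |
      [forall j : 'I_l, forall k : 'I_l, (j < k)%N ==> (f j < f k)%N] &&
      [forall j : 'I_l, tnth v (f j) == tnth u j]]|.

Section Channels.
Variable R : realType.

Definition log2 (x : R) : R := ln x / ln 2.

(* 1-deletion channel, input length n, output length m (= n-1):
   Pr{y | x} = omega_y(x) / n. *)
Definition del_prob (q n m : nat) (x : n.-tuple 'I_q) (y : m.-tuple 'I_q) : R :=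
  (omega y x)%:R / n%:R.

(* 1-insertion channel, input length n, output length m (= n+1):
   Pr{y | x} = omega_x(y) / ((n+1) q). *)
Definition ins_prob (q n m : nat) (x : n.-tuple 'I_q) (y : m.-tuple 'I_q) : R :=
  (omega x y)%:R / ((n.+1)%:R * q%:R).

(* Posterior under uniform input X on Sigma_q^n. *)
Definition posterior (q n m : nat) (ch : n.-tuple 'I_q -> m.-tuple 'I_q -> R)
  (y : m.-tuple 'I_q) (x : n.-tuple 'I_q) : R :=
  ch x y / \sum_(x' : n.-tuple 'I_q) ch x' y.

Definition entropy_bits (T : finType) (P : T -> R) : R :=
  - \sum_(t : T) (if P t == 0 then 0 else P t * log2 (P t)).

Definition H_in (q n m : nat) (ch : n.-tuple 'I_q -> m.-tuple 'I_q -> R)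
  (y : m.-tuple 'I_q) : R :=
  entropy_bits (posterior ch y).

Definition H_in_del (q n : nat) (y : n.-1.-tuple 'I_q) : R :=
  H_in (@del_prob q n n.-1) y.

Definition H_in_ins (q n : nat) (y : n.+1.-tuple 'I_q) : R :=
  H_in (@ins_prob q n n.+1) y.

Definition unif_exp (q m : nat) (F : m.-tuple 'I_q -> R) : R :=
  (\sum_(y : m.-tuple 'I_q) F y) / (q ^ m)%:R.

End Channels.

(* Number of runs of length exactly r in s : a run is a maximal block of
   identical consecutive symbols; it is identified by its start position i. *)
Definition nruns (q l r : nat) (s : l.-tuple 'I_q) : nat :=
  #|[set i : 'I_l |
      let d := tnth s i in
      [&& (0 < r)%N, (i + r <= l)%N,
          all (fun k => nth d s k == nth d s i) (iota i r),
          (i == 0%N :> nat) || (nth d s i.-1 != nth d s i) &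
          (i + r == l)%N || (nth d s (i + r) != nth d s i)]]|.

Definition Nruns (l r q : nat) : nat := \sum_(s : l.-tuple 'I_q) nruns r s.

(* Main.v *)
Require Import Defs.
From HB Require Import structures.
From mathcomp Require Import all_boot all_order all_algebra zify.
From mathcomp Require Import reals exp.
Import Order.TTheory GRing.Theory Num.Theory.

Module M_Comb.
Set Implicit Arguments. Unset Strict Implicit. Unset Printing Implicit Defensive.

Section Tup.
Variable T : finType.

Definition tdel m (k : 'I_m.+1) (Z : m.+1.-tuple T) : m.-tuple T :=
  [tuple tnth Z (lift k j) | j < m].
Definition tins m (k : 'I_m.+1) (a : T) (y : m.-tuple T) : m.+1.-tuple T :=
  [tuple match unlift k j with Some j' => tnth y j' | None => a end | j < m.+1].

Lemma tdel_ins m k a (y : m.-tuple T) : tdel k (tins k a y) = y.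
Proof.
apply: eq_from_tnth => j; rewrite !tnth_mktuple liftK //.
Qed.

Lemma tins_del m k (Z : m.+1.-tuple T) : tins k (tnth Z k) (tdel k Z) = Z.
Proof.
apply: eq_from_tnth => j; rewrite !tnth_mktuple.
by case: unliftP => [j'|] ->; rewrite ?tnth_mktuple.
Qed.

Lemma tnth_ins_k m k a (y : m.-tuple T) : tnth (tins k a y) k = a.
Proof. by rewrite tnth_mktuple unlift_none. Qed.

Lemma card_del_fiber m k (y : m.-tuple T) :
  #|[set Z : m.+1.-tuple T | tdel k Z == y]| = #|T|.
Proof.
have -> : [set Z : m.+1.-tuple T | tdel k Z == y] = (fun a => tins k a y) @: setT.
  apply/setP => Z; rewrite inE; apply/eqP/imsetP => [<-|[a _ ->]].
    by exists (tnth Z k); rewrite ?inE ?tins_del.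
  by rewrite tdel_ins.
rewrite card_imset ?cardsT // => a b /(congr1 (fun Z => tnth Z k)).
by rewrite !tnth_ins_k.
Qed.

Lemma nth_tdel x0 m k (Z : m.+1.-tuple T) j :
  nth x0 (tdel k Z) j = nth x0 Z (bump k j).
Proof.
case: (ltnP j m) => hj.
  have -> : nth x0 (tdel k Z) j = tnth (tdel k Z) (Ordinal hj).
    by rewrite (tnth_nth x0).
  by rewrite tnth_mktuple (tnth_nth x0).
rewrite !nth_default ?size_tuple //.
rewrite /bump; have := ltn_ord k; lia.
Qed.

End Tup.

End M_Comb.
Import M_Comb.

Module M_Comb2.
Set Implicit Arguments. Unset Strict Implicit. Unset Printing Implicit Defensive.

Lemma inc_gap m (f : 'I_m -> nat) :
  (forall j k : 'I_m, j < k -> f j < f k) ->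
  forall d (i j : 'I_m), (j : nat) = i + d -> f i + d <= f j.
Proof.
move=> inc; elim=> [|d IH] i j hj.
  by rewrite addn0; have -> : j = i by apply: val_inj; rewrite /= hj addn0.
have hj' : (j - 1) < m by have := ltn_ord j; lia.
have e1 : ((Ordinal hj') : nat) = i + d by rewrite /=; lia.
have e2 : (Ordinal hj') < j by rewrite /=; lia.
have := IH i (Ordinal hj') e1.
have := inc (Ordinal hj') j e2.
lia.
Qed.

Lemma omega_del q m (u : m.-tuple 'I_q) (v : m.+1.-tuple 'I_q) :
  omega u v = #|[set k : 'I_m.+1 | tdel k v == u]|.
Proof.
rewrite /omega.
set F := fun k : 'I_m.+1 => [ffun j : 'I_m => lift k j].
have Finj : injective F.
  move=> k k' /ffunP H; apply/eqP; case: (ltngtP k k') => hk; last by apply/eqP; apply: val_inj.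
    have hkm : (k < m) by have := ltn_ord k'; lia.
    have := congr1 val (H (Ordinal hkm)); rewrite !ffunE /= /bump; lia.
  have hkm : (k' < m) by have := ltn_ord k; lia.
  have := congr1 val (H (Ordinal hkm)); rewrite !ffunE /= /bump; lia.
rewrite -(card_imset _ Finj); apply: eq_card => f; rewrite !inE.
apply/idP/imsetP.
  case/andP => /forallP inc0 /forallP hv.
  have inc : forall j k : 'I_m, j < k -> f j < f k.
    by move=> j k jk; have /forallP/(_ k)/implyP := inc0 j; apply.
  have incn : forall j k : 'I_m, j < k -> (nat_of_ord (f j) < nat_of_ord (f k)) by [].
  have gap := inc_gap (f := fun j => nat_of_ord (f j)) incn.
  have lo : forall j : 'I_m, j <= f j.
    move=> j; have h0 : 0 < m by have := ltn_ord j; lia.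
    have := gap j (Ordinal h0) j ltac:(rewrite /=; lia); lia.
  have hi : forall j : 'I_m, f j <= j.+1.
    move=> j; have h0 : (m - 1) < m by have := ltn_ord j; lia.
    have := gap ((m - 1) - j) j (Ordinal h0) ltac:(rewrite /=; have := ltn_ord j; lia).
    have := ltn_ord (f (Ordinal h0)); lia.
  pose P n := (n == m) || [exists j : 'I_m, (nat_of_ord j == n) && (nat_of_ord (f j) != nat_of_ord j)].
  have exP : exists n, P n by exists m; rewrite /P eqxx.
  case: (ex_minnP exP) => k Pk kmin.
  have km : k <= m.
    by apply: kmin; rewrite /P eqxx.
  have below : forall j : 'I_m, j < k -> nat_of_ord (f j) = val j.
    move=> j jk; apply/eqP; apply: contraTT jk => hne; rewrite -leqNgt.
    by apply: kmin; rewrite /P; apply/orP; right; apply/existsP; exists j; rewrite eqxx.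
  have above : forall j : 'I_m, k <= j -> nat_of_ord (f j) = j.+1.
    move=> j kj; move: Pk; rewrite /P => /orP [/eqP ek|/existsP [j0 /andP [/eqP ej0 hne]]].
      by have := ltn_ord j; lia.
    have := gap (j - j0) j0 j ltac:(lia).
    have := lo j0; have := hi j0; have := hi j; move/eqP: hne; lia.
  have kl : k < m.+1 by lia.
  exists (Ordinal kl).
    rewrite inE; apply/eqP/eq_from_tnth => j; rewrite tnth_mktuple.
    have -> : lift (Ordinal kl) j = f j.
      apply: val_inj; rewrite /= /bump /=.
      case: (ltnP j k) => jk; first by rewrite below //; lia.
      by rewrite above //; lia.
    by apply/eqP; apply: hv.
  apply/ffunP => j; rewrite ffunE; apply: val_inj; rewrite /= /bump /=.
  case: (ltnP j k) => jk; first by rewrite below //; lia.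
  by rewrite above //; lia.
case=> k; rewrite inE => /eqP hk ->; apply/andP; split.
  apply/forallP => j; apply/forallP => j'; apply/implyP => jj.
  by rewrite !ffunE /= /bump; lia.
apply/forallP => j; rewrite ffunE -hk tnth_mktuple //.
Qed.

End M_Comb2.
Import M_Comb2.

Module M_Comb3.
Set Implicit Arguments. Unset Strict Implicit. Unset Printing Implicit Defensive.

Section Runs.
Variable T : eqType.
Variable z : nat -> T.

Definition RunP (l i r : nat) : bool :=
  [&& (0 < r)%N, (i + r <= l)%N,
      all (fun k => z k == z i) (iota i r),
      (i == 0%N :> nat) || (z i.-1 != z i) &
      (i + r == l)%N || (z (i + r) != z i)].

Definition chain a b := forall j, a <= j < b -> z j = z j.+1.
Definition chainb a b := all (fun j => z j == z j.+1) (iota a (b - a)).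

Lemma chainbP a b : reflect (chain a b) (chainb a b).
Proof.
apply: (iffP allP) => H j.
  move=> hj; apply/eqP; apply: H; rewrite mem_iota; lia.
by rewrite mem_iota => hj; apply/eqP; apply: H; lia.
Qed.

Lemma chain_const a b : chain a b -> forall j, a <= j <= b -> z j = z a.
Proof.
move=> H; elim=> [|j IH] hj; first by have -> : a = 0 by lia.
case: (a =P j.+1) => [->//|ne].
by rewrite -H ?IH //; lia.
Qed.

Lemma RunPP l i r : reflect
  [/\ 0 < r, i + r <= l, (forall j, i <= j < i + r -> z j = z i),
      (i = 0 \/ z i.-1 <> z i) & (i + r = l \/ z (i + r) <> z i)]
  (RunP l i r).
Proof.
apply: (iffP and5P) => [[h1 h2 /allP h3 h4 h5]|[h1 h2 h3 h4 h5]]; split => //.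
- by move=> j hj; apply/eqP; apply: h3; rewrite mem_iota.
- by case/orP: h4 => [/eqP|/eqP]; [left|right].
- by case/orP: h5 => [/eqP|/eqP]; [left|right].
- by apply/allP => j; rewrite mem_iota => hj; apply/eqP; apply: h3.
- by case: h4 => [->|/eqP ->]; rewrite ?eqxx ?orbT.
- by case: h5 => [->|/eqP ->]; rewrite ?eqxx ?orbT.
Qed.

Lemma run_exists l k : k < l -> exists i r, RunP l i r /\ i <= k < i + r.
Proof.
move=> kl.
pose P a := (a <= k) && chainb a k.
have exP : exists a, P a.
  by exists k; rewrite /P leqnn /chainb subnn.
case: (ex_minnP exP) => i /andP [ik /chainbP ci] imin.
pose Q b := (k <= b < l) && chainb k b.
have exQ : exists b, Q b.
  by exists k; rewrite /Q leqnn kl /chainb subnn.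
have ubQ : forall b, Q b -> b <= l by move=> b /andP [/andP [_ /ltnW]].
case: (ex_maxnP exQ ubQ) => e /andP [/andP [ke el] /chainbP ce] emax.
have cie : chain i e.
  move=> j hj; case: (ltnP j k) => jk; [apply: ci | apply: ce]; lia.
have cst := chain_const cie.
exists i, (e.+1 - i); split; last by lia.
apply/RunPP; split; try lia.
- by move=> j hj; apply: cst; lia.
- case: (i =P 0) => [|ne]; [by left|right] => eq.
  have : i <= i.-1; last by lia.
  apply: imin; rewrite /P; apply/andP; split; first by lia.
  apply/chainbP => j hj; case: (j =P i.-1) => [->|jne].
    by rewrite eq; congr z; lia.
  by apply: ci; lia.
- case: (i + (e.+1 - i) =P l) => [|ne]; [by left|right] => eq.
  have : e.+1 <= e; last by lia.
  apply: emax; rewrite /Q; apply/andP; split; first by lia.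
  apply/chainbP => j hj; case: (j =P e) => [->|jne].
    have -> : e.+1 = i + (e.+1 - i) by lia.
    by rewrite eq cst //; lia.
  by apply: ce; lia.
Qed.

Lemma run_start_unique l i r i' r' :
  RunP l i r -> RunP l i' r' -> i < i' -> i' < i + r -> False.
Proof.
move=> /RunPP [h1 h2 h3 h4 h5] /RunPP [g1 g2 g3 g4 g5] ii ir.
case: g4 => [|]; first by lia.
by rewrite h3 ?(h3 i') //; lia.
Qed.

Lemma run_len_unique l i r r' :
  RunP l i r -> RunP l i r' -> r < r' -> False.
Proof.
move=> /RunPP [h1 h2 h3 h4 h5] /RunPP [g1 g2 g3 g4 g5] rr.
case: h5 => [|]; first by lia.
by rewrite g3 //; lia.
Qed.

Lemma run_unique l i r i' r' k :
  RunP l i r -> RunP l i' r' -> i <= k < i + r -> i' <= k < i' + r' ->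
  i = i' /\ r = r'.
Proof.
move=> H1 H2 k1 k2.
have ei : i = i'.
  case: (ltngtP i i') => // c.
    by case: (run_start_unique H1 H2 c); lia.
  by case: (run_start_unique H2 H1 c); lia.
subst i'; split => //.
case: (ltngtP r r') => // c.
  by case: (run_len_unique H1 H2 c).
by case: (run_len_unique H2 H1 c).
Qed.

Lemma run_class l i r k k' : RunP l i r -> i <= k < i + r -> k' < l ->
  (chain (minn k k') (maxn k k') <-> i <= k' < i + r).
Proof.
move=> /RunPP [h1 h2 h3 h4 h5] hk hk'; split.
  move=> ch; case: (ltnP k' i) => c1.
    case: h4 => [|h4]; first by lia.
    exfalso; apply: h4; rewrite ch; last by lia.
    by congr z; lia.
  case: (ltnP k' (i + r)) => c2; first by lia.
  case: h5 => [|h5]; first by lia.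
  exfalso; apply: h5.
  have -> : i + r = (i + r).-1.+1 by lia.
  have e1 : z (i + r).-1 = z (i + r).-1.+1 by apply: ch; lia.
  rewrite -e1 h3 //; lia.
move=> hk2 j hj; rewrite !h3 //; lia.
Qed.

End Runs.

Lemma tdel_eq (T : finType) x0 m (Z : m.+1.-tuple T) (a b : 'I_m.+1) :
  tdel a Z = tdel b Z <-> chain (nth x0 Z) (minn a b) (maxn a b).
Proof.
wlog hab : a b / a <= b.
  move=> H; case: (boolP (a <= b)) => c; first by move: (H a b c).
  have h : b <= a by lia.
  rewrite minnC maxnC -(H b a h).
  by split=> ->.
have -> : minn a b = a by lia.
have -> : maxn a b = b by lia.
split.
  move=> E j hj; have := congr1 (fun t : m.-tuple T => nth x0 t j) E.
  rewrite /= !nth_tdel /bump.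
  have -> : (a <= j) = true by lia.
  have -> : (b <= j) = false by lia.
  by rewrite add1n add0n => ->.
move=> ch; apply: val_inj; apply: (eq_from_nth (x0:=x0)); first by rewrite !size_tuple.
move=> j _; rewrite !nth_tdel /bump.
case: (boolP (j < a)) => ja.
  have -> : (a <= j) = false by lia.
  by have -> : (b <= j) = false by lia.
case: (boolP (j < b)) => jb.
  have -> : (a <= j) = true by lia.
  have -> : (b <= j) = false by lia.
  rewrite add1n add0n; symmetry; apply: ch; lia.
have -> : (a <= j) = true by lia.
by have -> : (b <= j) = true by lia.
Qed.

End M_Comb3.
Import M_Comb3.

Module M_Comb4.
Set Implicit Arguments. Unset Strict Implicit. Unset Printing Implicit Defensive.
Local Open Scope ring_scope.

Lemma sum_bool_card (I : finType) (P : pred I) :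
  (\sum_(i : I) (P i : nat))%N = #|[set i | P i]|.
Proof.
rewrite -sum1_card [RHS]big_mkcond /=; apply: eq_bigr => i _; rewrite inE.
by case: (P i).
Qed.

Lemma card_interval L i r : (i + r <= L)%N ->
  #|[set k : 'I_L | (i <= k < i + r)%N]| = r.
Proof.
move=> h; rewrite -sum_bool_card.
rewrite -(big_mkord xpredT (fun k => ((i <= k < i + r)%N : nat))).
rewrite (big_cat_nat _ (n:=i)) //=; last by lia.
rewrite (big_cat_nat _ (m:=i) (n:=i+r)) //=; last by lia.
rewrite big1_seq; last first.
  move=> k /andP[_]; rewrite mem_index_iota => hk.
  by have -> : (i <= k)%N = false by lia.
rewrite [\sum_(i + r <= k < L) _]big1_seq; last first.
  move=> k /andP[_]; rewrite mem_index_iota => hk.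
  have -> : (k < i + r)%N = false by lia.
  by rewrite andbF.
rewrite (eq_big_nat _ _ (F2 := fun _ => 1%N)); last by move=> k hk; lia.
by rewrite sum_nat_const_nat; lia.
Qed.

Section RunSum.
Variable R : pzRingType.
Variable T : finType.
Variable x0 : T.

Lemma run_sum m (Z : m.+1.-tuple T) (g : nat -> R) :
  \sum_(k : 'I_m.+1) g #|[set k' | tdel k' Z == tdel k Z]|
  = \sum_(1 <= r < m.+2)
      (#|[set i : 'I_m.+1 | RunP (nth x0 Z) m.+1 i r]|)%:R * r%:R * g r.
Proof.
set z := nth x0 Z.
have step1 : forall k : 'I_m.+1, g #|[set k' | tdel k' Z == tdel k Z]| =
   \sum_(r < m.+2) \sum_(i : 'I_m.+1)
      ((RunP z m.+1 i r) && (i <= k < i + r)%N)%:R * g r.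
  move=> k.
  have [i0 [r0 [H0 hk]]] := run_exists z (ltn_ord k).
  have [h1 h2 _ _ _] := RunPP z m.+1 i0 r0 H0.
  have hr0 : (r0 < m.+2)%N by lia.
  have hi0 : (i0 < m.+1)%N by lia.
  have -> : #|[set k' | tdel k' Z == tdel k Z]| = r0.
    rewrite -(card_interval (L := m.+1) h2); apply: eq_card => k'.
    rewrite !inE; apply/eqP/idP.
      by move/(tdel_eq x0); rewrite minnC maxnC; move/(run_class H0 hk (ltn_ord k')).
    by move/(run_class H0 hk (ltn_ord k')); rewrite -minnC -maxnC => /(tdel_eq x0).
  rewrite (bigD1 (Ordinal hr0)) //= (bigD1 (Ordinal hi0)) //= H0 hk /= mul1r.
  rewrite big1 ?addr0; last first.
    move=> i /eqP ne; case: (boolP (RunP z m.+1 i r0 && _)) => [/andP [Hi hki]|]; last by rewrite mul0r.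
    by case: (run_unique H0 Hi hk hki) => e _; case: ne; apply: val_inj.
  rewrite big1 ?addr0 //.
  move=> r /eqP ne; apply: big1 => i _.
  case: (boolP (RunP z m.+1 i r && _)) => [/andP [Hi hki]|]; last by rewrite mul0r.
  by case: (run_unique H0 Hi hk hki) => _ e; case: ne; apply: val_inj.
rewrite (eq_bigr _ (fun k _ => step1 k)).
rewrite exchange_big /=; rewrite (eq_bigr (fun r : 'I_m.+2 =>
   (#|[set i : 'I_m.+1 | RunP z m.+1 i r]|)%:R * r%:R * g r)); last first.
  move=> r _; rewrite exchange_big /=.
  rewrite -sum_bool_card natr_sum big_distrl big_distrl /=.
  apply: eq_bigr => i _.
  case: (boolP (RunP z m.+1 i r)) => Hi; last first.
    by rewrite big1 ?mulr0n ?mul0r // => k _; rewrite /= mulr0n mul0r.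
  have [h1 h2 _ _ _] := RunPP z m.+1 i r Hi.
  rewrite /= mul1r -big_distrl /= -natr_sum.
  by rewrite sum_bool_card card_interval.
rewrite -(big_mkord (fun _ => true) (fun r => (#|[set i : 'I_m.+1 | RunP z m.+1 i r]|)%:R * r%:R * g r)).
by rewrite big_ltn // mulr0n mulr0 mul0r add0r.
Qed.

End RunSum.

End M_Comb4.
Import M_Comb4.

Module M_Comb5.
Set Implicit Arguments. Unset Strict Implicit. Unset Printing Implicit Defensive.
Local Open Scope ring_scope.

Lemma fiber_sum (R : pzRingType) (A B : finType) (phi : A -> B) (h : nat -> R) :
  \sum_(b : B) (#|[set a | phi a == b]|)%:R * h #|[set a | phi a == b]|
  = \sum_(a : A) h #|[set a' | phi a' == phi a]|.
Proof.
rewrite [RHS](partition_big phi xpredT) //=; apply: eq_bigr => b _.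
rewrite (eq_bigr (fun _ => h #|[set a | phi a == b]|)); last by move=> a /eqP ->.
rewrite (eq_bigl (fun a => a \in [set a | phi a == b])); last by move=> a; rewrite inE.
by rewrite sumr_const mulr_natl.
Qed.

Lemma fiber_card (A B : finType) (phi : A -> B) :
  (\sum_(b : B) #|[set a | phi a == b]|)%N = #|A|.
Proof.
rewrite -sum1_card (partition_big phi xpredT) //=; apply: eq_bigr => b _.
rewrite -sum1_card; apply: eq_bigl => a; rewrite inE.
by [].
Qed.

Lemma RunP_ext_in (T : eqType) (z1 z2 : nat -> T) l i r : (i < l)%N ->
  (forall j, (j < l)%N -> z1 j = z2 j) -> RunP z1 l i r = RunP z2 l i r.
Proof.
move=> il E0.
have key : forall z1 z2 : nat -> T, (forall j, (j < l)%N -> z1 j = z2 j) ->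
    RunP z1 l i r -> RunP z2 l i r.
  move=> y1 y2 E /RunPP [h1 h2 h3 h4 h5]; apply/RunPP; split => //.
  - move=> j hj; have e1 := E j ltac:(lia); have e2 := E i il.
    by rewrite -e1 -e2; apply: h3.
  - case: h4 => [->|ne]; [by left|right].
    have e1 := E i.-1 ltac:(lia); have e2 := E i il.
    by rewrite -e1 -e2.
  - case: (i + r =P l)%N => [->|nl]; [by left|right].
    case: h5 => [//|ne].
    have e1 := E (i + r)%N ltac:(lia); have e2 := E i il.
    by rewrite -e1 -e2.
apply/idP/idP; apply: key => // j hj; by rewrite E0.
Qed.

Lemma nruns_RunP q l r (x0 : 'I_q) (s : l.-tuple 'I_q) :
  nruns r s = #|[set i : 'I_l | RunP (nth x0 s) l i r]|.
Proof.
apply: eq_card => i; rewrite !inE.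
rewrite -/(RunP (nth (tnth s i) s) l i r).
apply: RunP_ext_in => // j hj; apply: set_nth_default; by rewrite size_tuple.
Qed.

Lemma bumpE1 i j : (i <= j)%N -> bump i j = j.+1.
Proof. by rewrite /bump => ->. Qed.
Lemma bumpE0 i j : (j < i)%N -> bump i j = j.
Proof. by move=> h; rewrite /bump; have -> : (i <= j)%N = false by lia. Qed.

Lemma run_shift (T : eqType) (z : nat -> T) m i r : (i < m)%N -> (0 < r)%N ->
  RunP z m.+1 i r.+1 = (z i == z i.+1) && RunP (fun j => z (bump i j)) m i r.
Proof.
move=> im r0; apply/RunPP/andP.
  case=> h1 h2 h3 h4 h5.
  have ei : z i.+1 = z i by apply: h3; lia.
  split; first by rewrite ei.
  apply/RunPP; split => //; try lia.
  - move=> j hj; rewrite !bumpE1 //; try lia.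
    by rewrite ei h3 //; lia.
  - case: (i =P 0%N) => [->|nz]; [by left|right]; case: h4 => // ne.
    rewrite bumpE0 ?bumpE1 //; try lia.
    by rewrite ei.
  - case: h5 => [e|ne]; [left; lia|right].
    rewrite !bumpE1 //; try lia.
    by rewrite ei; move: ne; rewrite addnS.
case=> /eqP ei /RunPP [h1 h2 h3 h4 h5].
have h3' : forall j, (i <= j < i + r)%N -> z j.+1 = z i.
  move=> j hj; have := h3 j hj; rewrite !bumpE1 //; try lia.
  by rewrite -ei.
split => //; try lia.
- move=> j hj; case: (j =P i) => [->//|ne].
  have -> : j = j.-1.+1 by lia.
  by apply: h3'; lia.
- case: (i =P 0%N) => [->|nz]; [by left|right]; case: h4 => // ne.
  move: ne; rewrite bumpE0 ?bumpE1 //; try lia.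
  by rewrite -ei.
- case: h5 => [e|ne]; [left; lia|right].
  move: ne; rewrite !bumpE1 //; try lia.
  by rewrite -ei addnS.
Qed.

Lemma Nruns_pos q l r (x0 : 'I_q) :
  Nruns l r q = (\sum_(i : 'I_l) #|[set s : l.-tuple 'I_q | RunP (nth x0 s) l i r]|)%N.
Proof.
rewrite /Nruns (eq_bigr _ (fun s _ => nruns_RunP r x0 s)).
rewrite (eq_bigr (fun s : l.-tuple 'I_q => \sum_(i : 'I_l) (RunP (nth x0 s) l i r : nat))%N); last first.
  by move=> s _; rewrite sum_bool_card.
rewrite exchange_big; apply: eq_bigr => i _; by rewrite sum_bool_card.
Qed.

Lemma Nruns_shift q m r (x0 : 'I_q) : (0 < r)%N -> Nruns m.+1 r.+1 q = Nruns m r q.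
Proof.
move=> r0; rewrite !(Nruns_pos _ _ x0) big_ord_recr /=.
have -> : #|[set s : m.+1.-tuple 'I_q | RunP (nth x0 s) m.+1 m r.+1]| = 0%N.
  apply: eq_card0 => s; rewrite inE; apply/negbTE; apply/RunPP => [[_ h2 _ _ _]]; lia.
rewrite addn0; apply: eq_bigr => i _.
set k : 'I_m.+1 := widen_ord (leqnSn m) i.
have hk : (k : nat) = i by [].
have inj : injective (fun t : m.-tuple 'I_q => tins k (tnth t i) t).
  by move=> t1 t2 /(congr1 (tdel k)); rewrite !tdel_ins.
rewrite -(card_imset _ inj); apply: eq_card => s; rewrite inE.
have bk : forall j, bump k j = bump i j by [].
apply/idP/imsetP.
  rewrite run_shift //; case/andP => /eqP ei Hr.
  exists (tdel k s).
    rewrite inE; rewrite (RunP_ext_in (z2 := fun j => nth x0 s (bump i j))) //.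
    by move=> j _; rewrite nth_tdel.
  have -> : tnth (tdel k s) i = tnth s k.
    rewrite tnth_mktuple !(tnth_nth x0) /= (bumpE1 (leqnn i)). by rewrite ei.
  by rewrite tins_del.
case=> t; rewrite inE => Ht ->.
rewrite run_shift //; apply/andP; split.
  have e1 : nth x0 (tins k (tnth t i) t) i = tnth t i.
    by rewrite -hk -tnth_nth tnth_ins_k.
  have e2 : nth x0 (tins k (tnth t i) t) i.+1 = tnth t i.
    by rewrite -(bumpE1 (leqnn i)) -bk -nth_tdel tdel_ins -tnth_nth.
  by rewrite e1 e2.
rewrite (RunP_ext_in (z2 := nth x0 t)) //.
by move=> j _; rewrite -bk -nth_tdel tdel_ins.
Qed.

End M_Comb5.
Import M_Comb5.

Module M_Main.
Local Open Scope ring_scope.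

Section Ent.
Variable R : realType.

Lemma log2_div (a b : R) : 0 < a -> 0 < b -> log2 (a / b) = log2 a - log2 b.
Proof.
move=> ha hb; rewrite /log2 lnM ?posrE ?invr_gt0 // lnV ?posrE //.
by rewrite mulrDl mulNr.
Qed.

Lemma log2_1 : log2 (1 : R) = 0.
Proof. by rewrite /log2 ln1 mul0r. Qed.

Lemma entropy_nat (T : finType) (w : T -> nat) (S : nat) :
  (0 < S)%N -> (\sum_t w t)%N = S ->
  entropy_bits (fun t => (w t)%:R / S%:R : R)
  = log2 S%:R - (\sum_t (w t)%:R * log2 (w t)%:R) / S%:R.
Proof.
move=> S0 hS; rewrite /entropy_bits.
have Sp : (0 : R) < S%:R by rewrite ltr0n.
rewrite (eq_bigr (fun t => (w t)%:R / S%:R * log2 (w t)%:R - (w t)%:R / S%:R * log2 S%:R)); last first.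
  move=> t _; case: (posnP (w t)) => [->|wp].
    by rewrite mul0r eqxx !mul0r subrr.
  have wp' : (0 : R) < (w t)%:R by rewrite ltr0n.
  have -> : ((w t)%:R / S%:R == 0 :> R) = false.
    by apply/negbTE; rewrite mulf_neq0 // ?invr_eq0 gt_eqF.
  by rewrite log2_div // mulrBr.
rewrite sumrB -!mulr_suml -natr_sum hS divff ?gt_eqF // mul1r.
rewrite (eq_bigr (fun t => (w t)%:R * log2 (w t)%:R / S%:R)); last first.
  by move=> t _; rewrite mulrAC.
by rewrite -mulr_suml opprB.
Qed.

Lemma entropy_ext (T : finType) (P1 P2 : T -> R) : P1 =1 P2 ->
  entropy_bits P1 = entropy_bits P2.
Proof. by move=> E; rewrite /entropy_bits; congr (- _); apply: eq_bigr => t _; rewrite E. Qed.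

Lemma div_div_cancel (a b c : R) : c != 0 -> (a / c) / (b / c) = a / b.
Proof. by move=> c0; rewrite invf_div mulrA divfK. Qed.

End Ent.

End M_Main.
Import M_Main.

Module M_Main2.
Local Open Scope ring_scope.

Section Parts.
Variable R : realType.

Lemma sum_const_tuple q m (c : R) :
  \sum_(y : m.-tuple 'I_q) c = (q ^ m)%:R * c.
Proof. by rewrite sumr_const card_tuple card_ord mulr_natl. Qed.

Lemma run_total q l (x0 : 'I_q) m (g : nat -> R) (hl : l = m.+1) :
  \sum_(x : l.-tuple 'I_q) \sum_(1 <= r < l.+1)
      (#|[set i : 'I_l | RunP (nth x0 x) l i r]|)%:R * r%:R * g r
  = \sum_(1 <= r < l.+1) (Nruns l r q)%:R * r%:R * g r.
Proof.
rewrite exchange_big /=; apply: eq_bigr => r _.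
rewrite /Nruns natr_sum !mulr_suml; apply: eq_bigr => x _.
by rewrite (nruns_RunP r x0).
Qed.

Lemma ins_part q n (hq : (1 < q)%N) :
  unif_exp (fun y : n.+1.-tuple 'I_q => @H_in_ins R q n y)
    = log2 n.+1%:R
      - (\sum_(1 <= r < n.+2) (Nruns n.+1 r q)%:R * r%:R * log2 r%:R)
        / (n.+1%:R * (q ^ n.+1)%:R).
Proof.
have q0 : (0 < q)%N by apply: ltn_trans hq.
pose x0 : 'I_q := Ordinal q0.
have Hy : forall y : n.+1.-tuple 'I_q, @H_in_ins R q n y =
    log2 n.+1%:R - (\sum_(1 <= r < n.+2)
      (#|[set i : 'I_n.+1 | RunP (nth x0 y) n.+1 i r]|)%:R * r%:R * log2 r%:R) / n.+1%:R.
  move=> y.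
  have hS : (\sum_(x : n.-tuple 'I_q) omega x y)%N = n.+1.
    rewrite (eq_bigr _ (fun x _ => omega_del x y)).
    by rewrite (fiber_card (fun k : 'I_n.+1 => tdel k y)) card_ord.
  rewrite /H_in_ins /H_in.
  rewrite (@entropy_ext R _ _ (fun x => (omega x y)%:R / n.+1%:R)); last first.
    move=> x; rewrite /posterior /ins_prob -mulr_suml -natr_sum hS.
    by rewrite div_div_cancel // mulf_neq0 // pnatr_eq0 // -lt0n.
  rewrite entropy_nat ?hS //; congr (_ - _ / _).
  rewrite (eq_bigr (fun x => (#|[set k : 'I_n.+1 | tdel k y == x]|)%:R *
      log2 (#|[set k : 'I_n.+1 | tdel k y == x]|)%:R)); last first.
    by move=> x _; rewrite omega_del.
  rewrite (fiber_sum (fun k : 'I_n.+1 => tdel k y) (fun w => log2 w%:R)).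
  exact: run_sum.
rewrite /unif_exp (eq_bigr _ (fun y _ => Hy y)) sumrB sum_const_tuple.
rewrite -mulr_suml (run_total q n.+1 x0 n (fun r => log2 r%:R : R) erefl).
have qn : (q ^ n.+1)%:R != 0 :> R by rewrite pnatr_eq0 -lt0n expn_gt0 q0.
have n0 : n.+1%:R != 0 :> R by rewrite pnatr_eq0.
set X := \sum_(1 <= r < n.+2) _.
rewrite mulrBl mulrAC divff // mul1r; congr (_ - _).
by rewrite -mulrA -invfM mulrC.
Qed.


Lemma del_part q m (hq : (1 < q)%N) :
  unif_exp (fun y : m.-tuple 'I_q => @H_in_del R q m.+1 y)
    = log2 (m.+1%:R * q%:R)
      - (\sum_(1 <= r < m.+1) (Nruns m r q)%:R * r.+1%:R * log2 r.+1%:R)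
        / (m.+1%:R * (q ^ m.+1)%:R).
Proof.
have q0 : (0 < q)%N by apply: ltn_trans hq.
pose x0 : 'I_q := Ordinal q0.
have Hy : forall y : m.-tuple 'I_q, @H_in_del R q m.+1 y =
    log2 (m.+1 * q)%N%:R - (\sum_(x : m.+1.-tuple 'I_q)
       (omega y x)%:R * log2 (omega y x)%:R) / (m.+1 * q)%N%:R.
  move=> y.
  have hS : (\sum_(x : m.+1.-tuple 'I_q) omega y x)%N = (m.+1 * q)%N.
    rewrite (eq_bigr _ (fun x _ => omega_del y x)).
    rewrite (eq_bigr (fun x : m.+1.-tuple 'I_q => \sum_(k : 'I_m.+1) (tdel k x == y : nat))%N); last first.
      by move=> x _; rewrite sum_bool_card.
    rewrite exchange_big /=.
    rewrite (eq_bigr (fun _ => q)); last first.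
      by move=> k _; rewrite sum_bool_card card_del_fiber card_ord.
    by rewrite sum_nat_const card_ord.
  rewrite /H_in_del /H_in.
  rewrite (@entropy_ext R _ _ (fun x => (omega y x)%:R / (m.+1 * q)%N%:R)); last first.
    move=> x; rewrite /posterior /del_prob -mulr_suml -natr_sum hS.
    by rewrite div_div_cancel // pnatr_eq0.
  by rewrite entropy_nat ?hS // muln_gt0 q0.
rewrite /unif_exp (eq_bigr _ (fun y _ => Hy y)) sumrB sum_const_tuple.
rewrite -mulr_suml exchange_big /=.
rewrite (eq_bigr (fun x : m.+1.-tuple 'I_q => \sum_(1 <= r < m.+2)
      (#|[set i : 'I_m.+1 | RunP (nth x0 x) m.+1 i r]|)%:R * r%:R * log2 r%:R)); last first.
  move=> x _.
  rewrite (eq_bigr (fun y => (#|[set k : 'I_m.+1 | tdel k x == y]|)%:R *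
      log2 (#|[set k : 'I_m.+1 | tdel k x == y]|)%:R)); last first.
    by move=> y _; rewrite omega_del.
  rewrite (fiber_sum (fun k : 'I_m.+1 => tdel k x) (fun w => log2 w%:R)).
  exact: run_sum.
rewrite (run_total q m.+1 x0 m (fun r => log2 r%:R : R) erefl).
rewrite [\sum_(1 <= r < m.+2) _]big_ltn // mulr1n log2_1 mulr0 add0r big_add1 /=.
rewrite (eq_big_nat _ _ (F2 := fun r => (Nruns m r q)%:R * r.+1%:R * log2 r.+1%:R)); last first.
  by move=> r /andP [r1 _]; rewrite Nruns_shift.
have qn : (q ^ m)%:R != 0 :> R by rewrite pnatr_eq0 -lt0n expn_gt0 q0.
have qq : q%:R != 0 :> R by rewrite pnatr_eq0 -lt0n q0.
have n0 : m.+1%:R != 0 :> R by rewrite pnatr_eq0.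
set X := \sum_(1 <= r < m.+1) _.
rewrite mulrBl mulrAC divff // mul1r natrM; congr (_ - _).
rewrite expnS !natrM -!mulrA -!invfM; congr (_ / _).
by rewrite mulrA.
Qed.

End Parts.


End M_Main2.
Import M_Main2.

Unset Implicit Arguments.
Local Open Scope ring_scope.

Theorem lemma12 (R : realType) (n q : nat) (hn : (1 <= n)%N) (hq : (2 <= q)%N) :
  unif_exp (fun y : n.-1.-tuple 'I_q => @H_in_del R q n y)
    = log2 (n%:R * q%:R)
      - (\sum_(1 <= r < n) (Nruns n.-1 r q)%:R * r.+1%:R * log2 r.+1%:R)
        / (n%:R * (q ^ n)%:R)
  /\
  unif_exp (fun y : n.+1.-tuple 'I_q => @H_in_ins R q n y)
    = log2 n.+1%:R
      - (\sum_(1 <= r < n.+2) (Nruns n.+1 r q)%:R * r%:R * log2 r%:R)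
        / (n.+1%:R * (q ^ n.+1)%:R).
Proof.
split; last exact: ins_part.
case: n hn => [//|m] _.
exact: del_part.
Qed.
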